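(* Let $a\in(0,1)$, $p\in(0,1)$, and let $(X_t)_{t=0,\dots,n}$ be a stationary Markov chain generated by the copula $C(u,v)=a\min(u,v)+(1-a)\max(u+v-1,0)$ and Bernoulli($p$) marginal distribution. If $a=p<1/2$ or $a=1-p\le1/2$, then $X_0,\dots,X_n$ are independent.
   Context: A stationary Markov chain $(X_t)$ is generated by a copula $C$ and a marginal cdf $F$ if each $X_t$ has cdf $F$ and $P(X_t\le x,X_{t+1}\le y)=C(F(x),F(y))$ for all $x,y$; Bernoulli($p$) means $P(X_t=1)=p=1-P(X_t=0)$. *)

(* Defs.v *)
From HB Require Import structures.
From mathcomp Require Import all_boot all_order all_algebra.
From mathcomp Require Import all_classical all_reals all_analysis.
Set Implicit Arguments. Unset Strict Implicit. Unset Printing Implicit Defensive.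
Import Order.TTheory GRing.Theory Num.Theory.
Local Open Scope classical_set_scope.
Local Open Scope ring_scope.

Definition copula_mix {R : realType} (a u v : R) : R :=
  a * Num.min u v + (1 - a) * Num.max (u + v - 1) 0.

Definition bernoulli_cdf {R : realType} (p x : R) : R :=
  if x < 0 then 0 else if x < 1 then 1 - p else 1.

Definition cyl {d} {T : measurableType d} {R : realType} {P : probability T R}
  (X : nat -> {RV P >-> R}) (k : nat) (x : nat -> R) : set T :=
  [set w | forall i, (i < k)%N -> X i w = x i].

Definition generated_by {d} {T : measurableType d} {R : realType}
  {P : probability T R} (X : nat -> {RV P >-> R}) (n : nat)
  (C : R -> R -> R) (F : R -> R) : Prop :=
  (forall t, (t <= n)%N -> forall x : R,
      P [set w | X t w <= x] = (F x)%:E) /\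
  (forall t, (t < n)%N -> forall x y : R,
      P [set w | X t w <= x /\ X t.+1 w <= y] = (C (F x) (F y))%:E).

(* Markov property for a chain with discrete (countable) state space:
   for every t < n and all states x_0..x_{t+1},
   P(X_0=x_0,..,X_{t+1}=x_{t+1}) P(X_t=x_t)
     = P(X_0=x_0,..,X_t=x_t) P(X_t=x_t, X_{t+1}=x_{t+1}),
   i.e. X_{t+1} is conditionally independent of (X_0..X_{t-1}) given X_t. *)
Definition markov_discrete {d} {T : measurableType d} {R : realType}
  {P : probability T R} (X : nat -> {RV P >-> R}) (n : nat) : Prop :=
  forall t, (t < n)%N -> forall x : nat -> R,
    (P (cyl X t.+2 x) * P [set w | X t w = x t] =
     P (cyl X t.+1 x) * P [set w | X t w = x t /\ X t.+1 w = x t.+1])%E.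

Definition independent_discrete {d} {T : measurableType d} {R : realType}
  {P : probability T R} (X : nat -> {RV P >-> R}) (n : nat) : Prop :=
  forall x : nat -> R,
    P (cyl X n.+1 x) = (\prod_(i < n.+1) P [set w | X i w = x i])%E.

(* Main.v *)
Require Import Defs.
From HB Require Import structures.
From mathcomp Require Import all_boot all_order all_algebra.
From mathcomp Require Import all_classical all_reals all_analysis.
Import Order.TTheory GRing.Theory Num.Theory.
Local Open Scope classical_set_scope.
Local Open Scope ring_scope.
From mathcomp Require Import ring lra zify.
Set Implicit Arguments. Unset Strict Implicit.

Section S.
Context d (T : measurableType d) (R : realType) (P : probability T R).

Definition mu (A : set T) : R := fine (P A).

Lemma PE A : measurable A -> P A = (mu A)%:E.
Proof. by move=> mA; rewrite /mu fineK// fin_num_measure. Qed.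
Arguments PE {A}.

Lemma mu_ge0 A : measurable A -> 0 <= mu A.
Proof. by move=> mA; rewrite -lee_fin -PE. Qed.

Lemma mu_le A B : measurable A -> measurable B -> A `<=` B -> mu A <= mu B.
Proof. move=> mA mB AB; rewrite -lee_fin -(PE mA) -(PE mB); by apply: le_measure; rewrite ?inE. Qed.

Lemma muT : mu setT = 1.
Proof. by rewrite /mu probability_setT. Qed.

Lemma muU A B : measurable A -> measurable B -> A `&` B = set0 ->
  mu (A `|` B) = mu A + mu B.
Proof.
move=> mA mB AB; have h : P (A `|` B) = (P A + P B)%E := measureU P mA mB AB.
by move: h; rewrite (PE (measurableU _ _ mA mB)) (PE mA) (PE mB) -EFinD; case.
Qed.

Lemma mu_null A N : measurable A -> measurable N -> mu N = 0 ->
  mu A = mu (A `\` N).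
Proof.
move=> mA mN N0; have : P A = (P (A `\` N) + P (A `&` N))%E := measureDI P mA mN.
rewrite (PE mA) (PE (measurableD mA mN)) (PE (measurableI _ _ mA mN)) -EFinD; case=> ->.
suff -> : mu (A `&` N) = 0 by rewrite addr0.
apply/eqP; rewrite eq_le mu_ge0 ?andbT; last exact: measurableI.
rewrite -N0 mu_le//; by [exact: measurableI | exact: subIsetr].
Qed.

Lemma mu_ae A B N : measurable A -> measurable B -> measurable N -> mu N = 0 ->
  (forall w, ~ N w -> (A w <-> B w)) -> mu A = mu B.
Proof.
move=> mA mB mN N0 H; rewrite (mu_null mA mN N0) (mu_null mB mN N0).
congr mu; apply/seteqP; split=> w /= [h1 h2]; split=> //; exact/(H w h2).
Qed.

Definition E (Y : {RV P >-> R}) (x : R) := [set w | Y w = x].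
Definition L (Y : {RV P >-> R}) (x : R) := [set w | Y w <= x].

Lemma mE Y x : measurable (E Y x).
Proof. by have := measurable_funP Y measurableT _ (measurable_set1 x); rewrite setTI. Qed.

Lemma mL Y x : measurable (L Y x).
Proof.
have := measurable_funP Y measurableT _ (measurable_itv `]-oo, x]); rewrite setTI.
congr measurable; apply/seteqP; split=> w /=; rewrite in_itv //=.
Qed.

Lemma mLt (Y : {RV P >-> R}) (x : R) : measurable [set w | Y w < x].
Proof.
have := measurable_funP Y measurableT _ (measurable_itv `]-oo, x[); rewrite setTI.
congr measurable; apply/seteqP; split=> w /=; rewrite in_itv //=.
Qed.


Lemma lim_lt (Y : {RV P >-> R}) (b c v : R) : b < c ->
  (forall x, b < x -> x < c -> mu (L Y x) = v) -> mu [set w | Y w < c] = v.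
Proof.
move=> bc H.
pose s (k : nat) : R := c - (c - b) / k.+2%:R.
have cb0 : 0 < c - b by rewrite subr_gt0.
have sb k : b < s k.
  have : (c - b) / k.+2%:R < c - b.
    by rewrite ltr_pdivrMr ?ltr0n // ltr_pMr // ltr1n.
  rewrite /s; set q := (c - b) / _; move=> h; lra.
have sc k : s k < c.
  by rewrite /s ltrBlDr ltrDl divr_gt0 // ltr0n.
pose F k := L Y (s k).
have mF k : measurable (F k) by exact: mL.
have UF : \bigcup_k F k = [set w | Y w < c].
  apply/seteqP; split=> w /=.
    by move=> [k _]; rewrite /F /L /= => h; apply: le_lt_trans h (sc k).
  move=> wc; have cw0 : 0 < c - Y w by rewrite subr_gt0.
  have z0 : 0 <= (c - b) / (c - Y w) by rewrite divr_ge0 // ltW.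
  exists (Num.bound ((c - b) / (c - Y w))) => //.
  rewrite /F /L /s /= lerBrDl -lerBrDr ler_pdivrMr ?ltr0n //.
  rewrite mulrC -ler_pdivrMr //; apply/ltW/(lt_le_trans (archi_boundP z0)).
  rewrite ler_nat; lia.
have mU : measurable [set w | Y w < c] by exact: mLt.
have ndF : nondecreasing_seq F.
  move=> i j ij; apply/subsetPset => w; rewrite /F /L /= => h.
  apply: le_trans h _; rewrite /s lerD2l lerN2 ler_pM2l // lef_pV2 ?posrE ?ltr0n //.
  rewrite ler_nat; lia.
have mUF : measurable (\bigcup_k F k) by rewrite UF.
have := @nondecreasing_cvg_mu _ _ _ P F mF mUF ndF.
rewrite UF.
have -> : P \o F = fun=> v%:E.
  by apply: funext => k /=; rewrite (PE (mF k)) H.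
move=> h; apply/EFin_inj; rewrite -(PE mU).
have := cvg_lim _ h; rewrite lim_cst // => <- //.
Qed.

Lemma point (Y : {RV P >-> R}) (b c v : R) : b < c ->
  (forall x, b < x -> x < c -> mu (L Y x) = v) -> mu (E Y c) = mu (L Y c) - v.
Proof.
move=> bc H; rewrite -(lim_lt bc H).
have -> : L Y c = [set w | Y w < c] `|` E Y c.
  apply/seteqP; split=> w /=; rewrite /L /E /=.
    by rewrite le_eqVlt => /orP[/eqP ->|->]; [right|left].
  by case=> [/ltW|->].
rewrite muU; [by rewrite addrAC subrr add0r | exact: mLt | exact: mE |].
by apply/seteqP; split=> w //= [h1 h2]; move: h1; rewrite /E /= in h2 *; rewrite h2 ltxx.
Qed.

Definition q (p x : R) := if x == 0 then 1 - p else if x == 1 then p else 0.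

Lemma F0 (p x : R) : x < 0 -> bernoulli_cdf p x = 0.
Proof. by move=> h; rewrite /bernoulli_cdf h. Qed.
Lemma F1 (p x : R) : 0 <= x -> x < 1 -> bernoulli_cdf p x = 1 - p.
Proof. by move=> h1 h2; rewrite /bernoulli_cdf ltNge h1 h2. Qed.
Lemma F2 (p x : R) : 1 <= x -> bernoulli_cdf p x = 1.
Proof.
move=> h; rewrite /bernoulli_cdf ltNge (le_trans _ h) //= ltNge h //.
Qed.

Lemma marg (Y : {RV P >-> R}) (p : R) :
  (forall x, P [set w | Y w <= x] = (bernoulli_cdf p x)%:E) ->
  forall x, mu (E Y x) = q p x.
Proof.
move=> HF.
have HL x : mu (L Y x) = bernoulli_cdf p x by rewrite /mu /L HF.
move=> x; rewrite /q.
have [x0|x0|->] := ltgtP x 0.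
- rewrite lt_eqF; last exact: (lt_trans x0 ltr01).
  apply/eqP; rewrite eq_le mu_ge0 ?andbT; last exact: mE.
  rewrite -(F0 p x0) -HL mu_le //; [exact: mE | exact: mL | by move=> w; rewrite /E /L /= => ->].
- have [x1|x1|->] := ltgtP x 1.
  + rewrite (@point _ 0 _ (1 - p)) //.
      by rewrite HL F1 ?subrr // ltW.
    by move=> y y0 y1; rewrite HL F1 ?(ltW y0) // (lt_trans y1 x1).
  + rewrite (@point _ 1 _ 1) //.
      by rewrite HL F2 ?subrr // ltW.
    by move=> y y0 y1; rewrite HL F2 // (ltW y0).
  + rewrite (@point _ 0 _ (1 - p)) //.
      by rewrite HL F2 // opprB addrC subrK.
    by move=> y y0 y1; rewrite HL F1 // (ltW y0).
- rewrite (@point _ (-1) _ 0) ?ltrN10 //.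
    by rewrite HL F1 ?subr0.
  by move=> y y0 y1; rewrite HL F0.
Qed.

Definition N (Y : {RV P >-> R}) := ~` (E Y 0 `|` E Y 1).

Lemma mN Y : measurable (N Y).
Proof. by apply: measurableC; apply: measurableU; exact: mE. Qed.

Lemma muN (Y : {RV P >-> R}) (p : R) :
  (forall x, P [set w | Y w <= x] = (bernoulli_cdf p x)%:E) -> mu (N Y) = 0.
Proof.
move=> HF.
have d01 : E Y 0 `&` E Y 1 = set0.
  apply/seteqP; split=> // w [h0 h1]; rewrite /E /= in h0 h1.
  by have /eqP := etrans (esym h0) h1; rewrite eq_sym oner_eq0.
have : mu setT = mu (E Y 0 `|` E Y 1) + mu (N Y).
  rewrite -muU; [by rewrite /N setUCr | apply: measurableU; exact: mE | exact: mN | exact: setICr].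
rewrite muT muU ?(marg HF) /q ?eqxx ?oner_eq0 //; try exact: mE.
by move=> h; apply/eqP; rewrite -(subr_eq0) ; apply/eqP; move: h; set m := mu _; lra.
Qed.


Lemma notN (Y : {RV P >-> R}) w : ~ N Y w -> Y w = 0 \/ Y w = 1.
Proof. by rewrite /N /= => /contrapT. Qed.

Lemma dis (Y : {RV P >-> R}) (A : set T) :
  (A `&` E Y 0) `&` (A `&` E Y 1) = set0.
Proof.
apply/seteqP; split=> // w [[_ h0] [_ h1]]; rewrite /E /= in h0 h1.
by have /eqP := etrans (esym h0) h1; rewrite eq_sym oner_eq0.
Qed.

Lemma splitZ (Z : {RV P >-> R}) (A : set T) : measurable A -> mu (N Z) = 0 ->
  mu A = mu (A `&` E Z 0) + mu (A `&` E Z 1).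
Proof.
move=> mA NZ; rewrite -muU; last exact: dis.
- apply: (mu_ae mA _ (mN Z) NZ).
    by apply: measurableU; apply: measurableI => //; exact: mE.
  move=> w /notN h; split.
    by move=> Aw; case: h => h; [left|right].
  by case=> -[].
- by apply: measurableI => //; exact: mE.
- by apply: measurableI => //; exact: mE.
Qed.

Lemma q0 p : q p 0 = 1 - p. Proof. by rewrite /q eqxx. Qed.
Lemma q1 p : q p 1 = p. Proof. by rewrite /q eqxx oner_eq0. Qed.
Lemma qo p i : i != 0 -> i != 1 -> q p i = 0.
Proof. by move=> h0 h1; rewrite /q (negbTE h0) (negbTE h1). Qed.

Lemma pair (Y Z : {RV P >-> R}) (p : R) :
  (forall x, P [set w | Y w <= x] = (bernoulli_cdf p x)%:E) ->
  (forall x, P [set w | Z w <= x] = (bernoulli_cdf p x)%:E) ->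
  mu [set w | Y w <= 0 /\ Z w <= 0] = (1 - p) * (1 - p) ->
  forall i j, mu (E Y i `&` E Z j) = q p i * q p j.
Proof.
move=> HY HZ H00.
have NY := muN HY; have NZ := muN HZ.
have mNN : measurable (N Y `|` N Z) by apply: measurableU; exact: mN.
have NN : mu (N Y `|` N Z) = 0.
  have NY' : P (N Y) = 0%E by rewrite (PE (mN Y)) NY.
  have NZ' : P (N Z) = 0%E by rewrite (PE (mN Z)) NZ.
  by rewrite /mu (@null_set_setU _ _ _ P _ _ (mN Y) (mN Z) NY' NZ').
have mEE i j : measurable (E Y i `&` E Z j) by apply: measurableI; exact: mE.
have e00 : mu (E Y 0 `&` E Z 0) = (1 - p) * (1 - p).
  rewrite -H00; apply: (mu_ae (mEE 0 0) _ mNN NN).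
    by apply: measurableI; exact: mL.
  move=> w /= hw.
  have /notN hy : ~ N Y w by move=> h; apply: hw; left.
  have /notN hz : ~ N Z w by move=> h; apply: hw; right.
  rewrite /E /=; split=> [[-> ->]//|[h1 h2]]; split.
    by case: hy => // h; move: h1; rewrite h ler10.
  by case: hz => // h; move: h2; rewrite h ler10.
have eY0 := splitZ (mE Y 0) NZ.
have eY1 := splitZ (mE Y 1) NZ.
have eZ0 := splitZ (mE Z 0) NY.
rewrite (marg HY) (marg HY) q0 q1 in eY0 eY1.
rewrite (marg HZ) q0 [E Z 0 `&` E Y 0]setIC [E Z 0 `&` E Y 1]setIC in eZ0.
have e01 : mu (E Y 0 `&` E Z 1) = (1 - p) * p.
  have -> : mu (E Y 0 `&` E Z 1) = (1 - p) - mu (E Y 0 `&` E Z 0) by lra.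
  rewrite e00; ring.
have e10 : mu (E Y 1 `&` E Z 0) = p * (1 - p).
  have -> : mu (E Y 1 `&` E Z 0) = (1 - p) - mu (E Y 0 `&` E Z 0) by lra.
  rewrite e00; ring.
have e11 : mu (E Y 1 `&` E Z 1) = p * p.
  have -> : mu (E Y 1 `&` E Z 1) = p - mu (E Y 1 `&` E Z 0) by lra.
  rewrite e10; ring.
move=> i j.
have [->|i0] := eqVneq i 0; last have [->|i1] := eqVneq i 1.
- have [->|j0] := eqVneq j 0; last have [->|j1] := eqVneq j 1.
  + by rewrite q0.
  + by rewrite q0 q1.
  + rewrite (qo p j0 j1) mulr0; apply/eqP; rewrite eq_le mu_ge0 // andbT.
    by rewrite -(qo p j0 j1) -(marg HZ) mu_le //; by [exact: mE | exact: mEE | exact: subIsetr | exact: subIsetl].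
- have [->|j0] := eqVneq j 0; last have [->|j1] := eqVneq j 1.
  + by rewrite q0 q1.
  + by rewrite q1.
  + rewrite (qo p j0 j1) mulr0; apply/eqP; rewrite eq_le mu_ge0 // andbT.
    by rewrite -(qo p j0 j1) -(marg HZ) mu_le //; by [exact: mE | exact: mEE | exact: subIsetr | exact: subIsetl].
- rewrite (qo p i0 i1) mul0r; apply/eqP; rewrite eq_le mu_ge0 // andbT.
  by rewrite -(qo p i0 i1) -(marg HY) mu_le //; by [exact: mE | exact: mEE | exact: subIsetr | exact: subIsetl].
Qed.

Lemma cylS (X : nat -> {RV P >-> R}) k x :
  cyl X k.+1 x = cyl X k x `&` E (X k) (x k).
Proof.
apply/seteqP; split=> w /=.
  by move=> h; split; [move=> i ik; apply: h; exact: leqW | apply: h].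
move=> [h1 h2] i; rewrite ltnS leq_eqVlt => /orP[/eqP ->|ik]; first exact: h2.
exact: h1.
Qed.

Lemma mcyl (X : nat -> {RV P >-> R}) k x : measurable (cyl X k x).
Proof.
elim: k => [|k IH].
  by rewrite (_ : cyl X 0 x = setT) //; apply/seteqP; split=> w.
by rewrite cylS; apply: measurableI => //; exact: mE.
Qed.

Lemma indep (X : nat -> {RV P >-> R}) n p x :
  markov_discrete X n ->
  (forall t, (t <= n)%N -> forall i, mu (E (X t) i) = q p i) ->
  (forall t, (t < n)%N -> forall i j,
     mu (E (X t) i `&` E (X t.+1) j) = q p i * q p j) ->
  forall k, (k <= n)%N -> mu (cyl X k.+1 x) = \prod_(i < k.+1) q p (x i).
Proof.
move=> HM Hm Hp; elim=> [|k IH] kn.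
  rewrite big_ord1 -(Hm 0%N) //; congr mu; apply/seteqP; split=> w /=.
    by apply.
  by move=> h [|i] // _.
have kn' : (k < n)%N by [].
have := HM k kn' x.
rewrite (PE (mcyl X k.+2 x)) (PE (mE (X k) (x k))) (PE (mcyl X k.+1 x)).
rewrite (PE (measurableI _ _ (mE (X k) (x k)) (mE (X k.+1) (x k.+1)))).
rewrite -!EFinM => -[].
rewrite (Hm k (ltnW kn')) (Hp k kn') (IH (ltnW kn')) => h.
have [q0|qn0] := eqVneq (q p (x k)) 0.
  rewrite big_ord_recr /= big_ord_recr /= q0 mulr0 mul0r.
  apply/eqP; rewrite eq_le mu_ge0 ?andbT; last exact: mcyl.
  rewrite -q0 -(Hm k (ltnW kn')) mu_le //; [exact: mcyl | exact: mE |].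
  by move=> w /= hw; apply: hw.
apply: (mulIf qn0); by rewrite /= h [in RHS]big_ord_recr /= mulrA mulrAC.
Qed.

End S.

Lemma copula_val (R : realType) (a p : R) : 0 < p < 1 ->
  (a = p /\ p < 1 / 2) \/ (a = 1 - p /\ 1 - p <= 1 / 2) ->
  copula_mix a (1 - p) (1 - p) = (1 - p) * (1 - p).
Proof.
move=> /andP[p0 p1] [[-> h]|[-> h]]; rewrite /copula_mix minxx.
  rewrite max_l; first ring.
  lra.
rewrite max_r; first ring.
lra.
Qed.

Theorem proposition5 (d : measure_display) (T : measurableType d)
  (R : realType) (P : probability T R) (n : nat)
  (X : nat -> {RV P >-> R}) (a p : R) :
  0 < a < 1 -> 0 < p < 1 ->
  markov_discrete X n ->
  generated_by X n (copula_mix a) (bernoulli_cdf p) ->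
  (a = p /\ p < 1 / 2) \/ (a = 1 - p /\ 1 - p <= 1 / 2) ->
  independent_discrete X n.
Proof.
move=> _ hp HM [HF HC] Ha x.
have Fp0 : bernoulli_cdf p 0 = 1 - p by rewrite F1.
have Hm t : (t <= n)%N -> forall i, mu P (E (X t) i) = q p i.
  by move=> tn i; apply: marg; exact: HF.
have Hp t : (t < n)%N -> forall i j,
    mu P (E (X t) i `&` E (X t.+1) j) = q p i * q p j.
  move=> tn; apply: (pair (HF t (ltnW tn)) (HF t.+1 tn)).
  rewrite /mu HC // Fp0 copula_val //.
rewrite (PE P (mcyl X n.+1 x)).
under eq_bigr => i _ do rewrite (PE P (mE (X i) (x i))) (Hm i (ltn_ord i)).
by rewrite prodEFin (indep x HM Hm Hp).
Qed.
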